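(* Let $\mathcal V$ be a multivector field on $X$, assume $X$ is invariant, and let $\mathcal M=\{M_p\mid p\in\mathbb P\}$ be a Morse decomposition of $X$ indexed by a finite poset $(\mathbb P,\le)$. If $I\subset\mathbb P$ is convex, then $(M(I^{\le}),M(I^{<}))$ is an index pair for the isolated invariant set $M(I)$.
   Context: $X$ is a finite $T_0$ topological space. For $A\subset X$, $\operatorname{cl}A$ is its closure and $\operatorname{mo}A:=\operatorname{cl}A\setminus A$. $A$ is locally closed if it is the intersection of an open and a closed subset of $X$. $H$ denotes relative singular homology. A multivector is a nonempty locally closed subset of $X$; a multivector field $\mathcal V$ on $X$ is a partition of $X$ into multivectors. For $x\in X$, $[x]$ denotes the element of $\mathcal V$ containing $x$. A multivector $V$ is critical if $H(\operatorname{cl}V,\operatorname{mo}V)\neq0$, regular otherwise. $A\subset X$ is $\mathcal V$-compatible if for every $x\in X$ either $[x]\cap A=\emptyset$ or $[x]\subset A$. Put $\Pi_{\mathcal V}(x):=[x]\cup\operatorname{cl}\{x\}$ and $\Pi_{\mathcal V}(A):=\bigcup_{x\in A}\Pi_{\mathcal V}(x)$. A $\mathbb Z$-interval is $\mathbb Z\cap I$ for a real interval $I$. A solution in $A\subset X$ is a map $\varphi:D\to A$ on a $\mathbb Z$-interval $D$ with $\varphi(i+1)\in\Pi_{\mathcal V}(\varphi(i))$ whenever $i,i+1\in D$; it is full if $D=\mathbb Z$, and a path if $D$ is bounded, its endpoints being $\varphi(\min D)$ and $\varphi(\max D)$. A full solution $\varphi$ is essential if for every $t\in\mathbb Z$ with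 $[\varphi(t)]$ regular, the set $\{s\in\mathbb Z:\varphi(s)\notin[\varphi(t)]\}$ is unbounded below and unbounded above. $\operatorname{Inv}A$ is the set of $x\in A$ such that there is an essential full solution $\varphi$ with image in $A$ and $\varphi(0)=x$; $A$ is invariant if $\operatorname{Inv}A=A$. A closed set $N$ isolates an invariant set $S\subset N$ if (a) every path in $N$ with both endpoints in $S$ has image contained in $S$, and (b) $\Pi_{\mathcal V}(S)\subset N$. An invariant set is an isolated invariant set if some closed set isolates it. For a full solution $\varphi$: $\operatorname{uim}^-\varphi:=\bigcap_{t\le0}\varphi((-\infty,t])$, $\operatorname{uim}^+\varphi:=\bigcap_{t\ge0}\varphi([t,\infty))$; the $\mathcal V$-hull $\langle A\rangle_{\mathcal V}$ is the intersection of all $\mathcal V$-compatible locally closed sets containing $A$; $\alpha(\varphi):=\langle\operatorname{uim}^-\varphi\rangle_{\mathcal V}$, $\omega(\varphi):=\langle\operatorname{uim}^+\varphi\rangle_{\mathcal V}$. For invariant $X$ and a finite poset $(\mathbb P,\le)$, a family $\mathcal M=\{M_p\mid p\in\mathbb P\}$ is a Morse decomposition of $X$ if (i) the $M_p$ are mutually disjoint isolated invariant subsets of $X$, and (ii) for every essential full solution $\varphi$ in $X$ either $\operatorname{im}\varphi\subset M_r$ for some $r\in\mathbb P$, or there exist $p,q\in\mathbb P$ with $q>p$, $\alpha(\varphi)\subset M_q$ and $\omega(\varphi)\subset M_p$. For $A,B\subset X$ the connection set $C(A,B)$ is the set of $x\in X$ for which there is an essential full solution $\varphi$ in $X$ with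 $\varphi(0)=x$, $\alpha(\varphi)\subset A$, $\omega(\varphi)\subset B$. For $I\subset\mathbb P$, $M(I):=\bigcup_{i,j\in I}C(M_i,M_j)$ (an isolated invariant set). $I$ is convex if $a\le b\le c$ with $a,c\in I$ implies $b\in I$; $I^{\le}:=\{a\in\mathbb P:\exists b\in I,\ a\le b\}$ and $I^<:=I^{\le}\setminus I$. An index pair for an isolated invariant set $S$ is a pair $(P_1,P_2)$ of closed subsets of $X$ with $P_2\subset P_1$ such that (IP1) if $x\in P_2$ and $y\in\Pi_{\mathcal V}(x)\cap P_1$ then $y\in P_2$; (IP2) if $x\in P_1$ and $\Pi_{\mathcal V}(x)\setminus P_1\neq\emptyset$ then $x\in P_2$; (IP3) $S=\operatorname{Inv}(P_1\setminus P_2)$. *)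

(* Defs.v *)
From HB Require Import structures.
From mathcomp Require Import all_boot all_order all_algebra.
From Stdlib Require Import ClassicalEpsilon.
Set Implicit Arguments. Unset Strict Implicit. Unset Printing Implicit Defensive.
Import Order.TTheory GRing.Theory Num.Theory.

Definition pbool (P : Prop) : bool :=
  if excluded_middle_informative P then true else false.

Section FiniteTopology.
Variable X : finType.
Variable opens : {set {set X}}.

Definition is_topology : Prop :=
  [/\ set0 \in opens, [set: X] \in opens,
      (forall U W, U \in opens -> W \in opens -> U :|: W \in opens) &
      (forall U W, U \in opens -> W \in opens -> U :&: W \in opens)].

Definition is_T0 : Prop :=
  forall x y : X, x != y -> exists2 U, U \in opens & (x \in U) != (y \in U).

Definition closedb (A : {set X}) : bool := ~: A \in opens.

Definition cl (A : {set X}) : {set X} :=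
  [set x | [forall B : {set X}, (closedb B && (A \subset B)) ==> (x \in B)]].

Definition mo (A : {set X}) : {set X} := cl A :\: A.

Definition locally_closedb (A : {set X}) : bool :=
  [exists U : {set X}, exists C : {set X},
     [&& U \in opens, closedb C & A == U :&: C]].

(* ---- relative homology of a pair of subspaces (K, L), L ⊆ K ----
   Via McCord's theorem, the singular homology of a finite T0 space is
   the simplicial homology of its order complex (w.r.t. the specialization
   order x <= y iff x \in cl {y}); same for pairs of subspaces.
   Simplices are strictly increasing sequences (canonically oriented),
   integer coefficients. *)
Definition spec_lt (x y : X) : bool := (x != y) && (x \in cl [set y]).

Definition simplex_in (K : {set X}) (s : seq X) : bool :=
  [&& s != [::], sorted spec_lt s & all (fun x => x \in K) s].

Definition rel_simplex (K L : {set X}) (s : seq X) : bool :=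
  simplex_in K s && ~~ all (fun x => x \in L) s.

(* boundary of a chain d supported on sequences of length n+2,
   evaluated at a sequence s of length n+1 *)
Definition bdry (n : nat) (d : seq X -> int) (s : seq X) : int :=
  (\sum_(t : n.+2.-tuple X)
     \sum_(i < n.+2 | s == take i t ++ drop i.+1 t) (-1) ^+ i * d t)%R.

(* relative n-cycle (n-simplices have n+1 vertices) *)
Definition rel_cycle (K L : {set X}) (n : nat) (c : seq X -> int) : Prop :=
  (forall s, c s != 0%R -> rel_simplex K L s && (size s == n.+1)) /\
  (forall m, n = m.+1 -> forall s, rel_simplex K L s -> bdry m c s = 0%R).

Definition rel_boundary (K L : {set X}) (n : nat) (c : seq X -> int) : Prop :=
  exists d : seq X -> int,
    (forall s, d s != 0%R -> simplex_in K s && (size s == n.+2)) /\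
    (forall s, rel_simplex K L s -> bdry n d s = c s).

Definition homology_nonzero (K L : {set X}) : Prop :=
  exists n (c : seq X -> int), rel_cycle K L n c /\ ~ rel_boundary K L n c.

Variable V : {set {set X}}.

Definition multivector_field : Prop :=
  partition V [set: X] /\ forall A, A \in V -> locally_closedb A.

Definition mvclass (x : X) : {set X} := pblock V x.

Definition critical (A : {set X}) : Prop := homology_nonzero (cl A) (mo A).

Definition compatibleb (A : {set X}) : bool :=
  [forall x, [disjoint mvclass x & A] || (mvclass x \subset A)].

Definition Pi (x : X) : {set X} := mvclass x :|: cl [set x].
Definition PiS (A : {set X}) : {set X} := \bigcup_(x in A) Pi x.

Definition full_solution (phi : int -> X) : Prop :=
  forall i : int, phi (i + 1)%R \in Pi (phi i).

Definition essential (phi : int -> X) : Prop :=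
  full_solution phi /\
  forall t : int, ~ critical (mvclass (phi t)) ->
    forall k : int,
      (exists s : int, (s < k)%R /\ phi s \notin mvclass (phi t)) /\
      (exists s : int, (k < s)%R /\ phi s \notin mvclass (phi t)).

Definition Inv (A : {set X}) : {set X} :=
  [set x | pbool (exists phi : int -> X,
                    [/\ essential phi, forall t, phi t \in A & phi 0%R = x])].

Definition mv_invariant (A : {set X}) : Prop := Inv A = A.

(* paths: nonempty finite solutions x0 :: p *)
Definition sol_path (x0 : X) (p : seq X) : bool :=
  path (fun x y => y \in Pi x) x0 p.

Definition isolates (N S : {set X}) : Prop :=
  [/\ closedb N, S \subset N,
      (forall x0 p, sol_path x0 p -> all (fun x => x \in N) (x0 :: p) ->
         x0 \in S -> last x0 p \in S -> all (fun x => x \in S) (x0 :: p)) &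
      PiS S \subset N].

Definition isolated_invariant (S : {set X}) : Prop :=
  mv_invariant S /\ exists N, isolates N S.

Definition uim_minus (phi : int -> X) : {set X} :=
  [set x | pbool (forall t : int, (t <= 0)%R -> exists s, (s <= t)%R /\ phi s = x)].
Definition uim_plus (phi : int -> X) : {set X} :=
  [set x | pbool (forall t : int, (0 <= t)%R -> exists s, (t <= s)%R /\ phi s = x)].

Definition hull (A : {set X}) : {set X} :=
  [set x | [forall B : {set X},
     [&& compatibleb B, locally_closedb B & A \subset B] ==> (x \in B)]].

Definition alpha (phi : int -> X) := hull (uim_minus phi).
Definition omega (phi : int -> X) := hull (uim_plus phi).

Definition morse_decomposition {d : Order.disp_t} (P : finPOrderType d)
    (M : P -> {set X}) : Prop :=
  [/\ (forall p q, p != q -> [disjoint M p & M q]),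
      (forall p, isolated_invariant (M p)) &
      (forall phi, essential phi ->
         (exists r, forall t, phi t \in M r) \/
         (exists p q, [/\ (p < q)%O, alpha phi \subset M q & omega phi \subset M p]))].

Definition conn_set (A B : {set X}) : {set X} :=
  [set x | pbool (exists phi, [/\ essential phi, phi 0%R = x,
                                  alpha phi \subset A & omega phi \subset B])].

Definition MI {d : Order.disp_t} (P : finPOrderType d) (M : P -> {set X})
    (I : {set P}) : {set X} :=
  \bigcup_(i in I) \bigcup_(j in I) conn_set (M i) (M j).

Definition index_pair (S P1 P2 : {set X}) : Prop :=
  [/\ closedb P1 && closedb P2, P2 \subset P1,
      (forall x y, x \in P2 -> y \in Pi x -> y \in P1 -> y \in P2),
      (forall x, x \in P1 -> ~~ (Pi x \subset P1) -> x \in P2) &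
      S = Inv (P1 :\: P2)].

End FiniteTopology.

Definition convex {d : Order.disp_t} (P : finPOrderType d) (I : {set P}) : Prop :=
  forall a b c : P, a \in I -> c \in I -> (a <= b)%O -> (b <= c)%O -> b \in I.

Definition down_le {d : Order.disp_t} (P : finPOrderType d) (I : {set P}) : {set P} :=
  [set a | [exists b in I, (a <= b)%O]].

Definition down_lt {d : Order.disp_t} (P : finPOrderType d) (I : {set P}) : {set P} :=
  down_le I :\: I.

(* Main.v *)
Require Import Defs.
From HB Require Import structures.
From mathcomp Require Import all_boot all_order all_algebra.
From mathcomp Require Import zify.
From Stdlib Require Import ClassicalEpsilon Classical.
Set Implicit Arguments. Unset Strict Implicit. Unset Printing Implicit Defensive.
Import Order.TTheory GRing.Theory Num.Theory.

Lemma pboolP (P : Prop) : pbool P <-> P.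
Proof. rewrite /pbool; case: excluded_middle_informative => //. Qed.

Section Topo.
Variable X : finType.
Variable opens : {set {set X}}.
Hypothesis Htop : is_topology opens.

Lemma cl1_refl x : x \in cl opens [set x].
Proof. by rewrite inE; apply/forallP => B; apply/implyP => /andP[_]; rewrite sub1set. Qed.

Lemma cl1_trans x y z : y \in cl opens [set x] -> z \in cl opens [set y] ->
  z \in cl opens [set x].
Proof.
rewrite !inE => /forallP H1 /forallP H2; apply/forallP => B; apply/implyP => /andP[cB].
rewrite sub1set => xB.
have := H2 B; rewrite cB sub1set /= => /implyP; apply.
by have := H1 B; rewrite cB sub1set xB.
Qed.

Lemma cl1_sep x y : y \notin cl opens [set x] ->
  exists2 O, O \in opens & (y \in O) && (x \notin O).
Proof.
rewrite inE negb_forall => /existsP[B]; rewrite negb_imply => /andP[/andP[cB]].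
rewrite sub1set => xB yB; exists (~: B) => //.
by rewrite !inE yB xB.
Qed.

Lemma closed_of_down (A : {set X}) : (forall x y, x \in A -> y \in cl opens [set x] -> y \in A) ->
  closedb opens A.
Proof.
case: Htop => o0 oT oU oI Hd.
have step1 : forall y, y \notin A -> forall s : seq X, all (fun x => x \in A) s ->
   exists2 O, O \in opens & (y \in O) && all (fun x => x \notin O) s.
  move=> y yA; elim=> [|x s IH] /=; first by exists setT => //; rewrite inE.
  case/andP=> xA /IH [O oO /andP[yO aO]].
  have : y \notin cl opens [set x] by apply: contra yA; apply: Hd.
  case/cl1_sep => O' oO' /andP[yO' xO'].
  exists (O :&: O'); first exact: oI.
  rewrite inE yO yO' /= inE negb_and xO' orbT /=.
  apply/allP => z zs; rewrite inE negb_and; by move/allP: aO => /(_ z zs) ->.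
have step2 : forall s : seq X, all (fun x => x \notin A) s ->
   exists2 O, O \in opens & all (fun x => x \in O) s && (O \subset ~: A).
  elim=> [|y s IH] /=; first by exists set0 => //; rewrite sub0set.
  case/andP=> yA /IH [O oO /andP[aO sO]].
  have hA : all (fun x => x \in A) (enum A) by apply/allP => x; rewrite mem_enum.
  have [O' oO' /andP[yO' aO']] := step1 y yA (enum A) hA.
  exists (O' :|: O); first exact: oU.
  rewrite inE yO' /= subUset sO andbT; apply/andP; split.
    by apply/allP => z zs; rewrite inE; move/allP: aO => /(_ z zs) ->; rewrite orbT.
  apply/subsetP => z zO'; rewrite inE; apply/negP => zA.
  by move/allP: aO' => /(_ z); rewrite mem_enum zA zO' => /(_ isT).
have hA : all (fun x => x \notin A) (enum (~: A)) by apply/allP => x; rewrite mem_enum inE.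
have [O oO /andP[aO sO]] := step2 (enum (~: A)) hA.
rewrite /closedb.
suff -> : ~: A = O by [].
apply/eqP; rewrite eqEsubset sO andbT; apply/subsetP => z zA.
by move/allP: aO => /(_ z); rewrite mem_enum => /(_ zA).
Qed.
End Topo.

Section MV.
Variable X : finType.
Variable opens : {set {set X}}.
Variable V : {set {set X}}.
Hypothesis Htop : is_topology opens.
Hypothesis HV : multivector_field opens V.

Lemma mv_self x : x \in mvclass V x.
Proof.
case: HV => /andP[/eqP cV _] _; by rewrite /mvclass mem_pblock cV inE.
Qed.

Lemma mv_same x y : y \in mvclass V x -> mvclass V y = mvclass V x.
Proof. case: HV => /and3P[_ tI _] _; exact: same_pblock. Qed.

Lemma mv_Pi x y : y \in mvclass V x -> y \in Pi opens V x.
Proof. by rewrite /Pi in_setU => ->. Qed.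

Lemma cl_Pi x y : y \in cl opens [set x] -> y \in Pi opens V x.
Proof. by rewrite /Pi in_setU => ->; rewrite orbT. Qed.

Lemma iso_compat S N : isolates opens V N S -> compatibleb V S.
Proof.
case=> _ SN Hp PiN; apply/forallP => x.
case: (boolP [disjoint mvclass V x & S]) => //= /pred0Pn [y /andP[yx yS]].
apply/subsetP => z zx.
have ey := mv_same yx; have ez := mv_same zx.
have zN : z \in N.
  apply: (subsetP PiN); apply/bigcupP; exists y => //; apply: mv_Pi; by rewrite ey.
have := Hp y [:: z; y]; rewrite /sol_path /= !mv_Pi ?ey ?ez ?(subsetP SN y yS) ?zN //= ?mv_self //.
by move/(_ isT isT yS yS) => /and3P[].
Qed.

Lemma iso_convex S N : isolates opens V N S -> forall x y z, x \in S -> z \in S ->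
  y \in cl opens [set z] -> x \in cl opens [set y] -> y \in S.
Proof.
case=> _ SN Hp PiN x y z xS zS yz xy.
have yN : y \in N by apply: (subsetP PiN); apply/bigcupP; exists z => //; apply: cl_Pi.
have := Hp z [:: y; x]; rewrite /sol_path /= !cl_Pi // (subsetP SN x xS) (subsetP SN z zS) yN.
by move/(_ isT isT zS xS) => /and3P[].
Qed.

Lemma iso_lc S N : isolates opens V N S -> locally_closedb opens S.
Proof.
move=> iso; have cv := iso_convex iso.
set U := [set y | [exists a in S, a \in cl opens [set y]]].
set C := [set y | [exists a in S, y \in cl opens [set a]]].
have inU y : (y \in U) = [exists a in S, a \in cl opens [set y]] by rewrite /U in_set.
have inC y : (y \in C) = [exists a in S, y \in cl opens [set a]] by rewrite /C in_set.
apply/existsP; exists U; apply/existsP; exists C; apply/and3P; split.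
- rewrite -[U]setCK; apply: closed_of_down => // y z; rewrite !in_setC inU => yU zy.
  rewrite inU; apply/negP => /existsP [a /andP[aS az]]; move/negP: yU; apply; apply/existsP; exists a.
  by rewrite aS (cl1_trans zy az).
- apply: closed_of_down => // y z; rewrite inC => /existsP[a /andP[aS ya]] zy.
  by rewrite inC; apply/existsP; exists a; rewrite aS (cl1_trans ya zy).
- rewrite eqEsubset; apply/andP; split; apply/subsetP => y.
    move=> yS; rewrite in_setI inU inC; apply/andP; split; apply/existsP; exists y; by rewrite yS cl1_refl.
  rewrite in_setI inU inC => /andP[/existsP[a /andP[aS ay]] /existsP[b /andP[bS yb]]].
  exact: (cv a y b).
Qed.

Lemma hull_sub (S A : {set X}) : isolated_invariant opens V S -> A \subset S -> hull opens V A \subset S.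
Proof.
case=> _ [N iso] AS; apply/subsetP => x; rewrite inE => /forallP /(_ S).
by rewrite (iso_compat iso) (iso_lc iso) AS => /implyP; apply.
Qed.

End MV.


Section Sol.
Local Open Scope ring_scope.
Variable X : finType.
Variable opens : {set {set X}}.
Variable V : {set {set X}}.
Hypothesis HV : multivector_field opens V.

Definition shift (phi : int -> X) (k : int) := fun t : int => phi (t + k).
Definition concat (phi psi : int -> X) := fun t : int => if t <= 0 then phi t else psi t.

Lemma ess_below phi z k : essential opens V phi -> ~ critical opens (mvclass V z) ->
  exists s, s < k /\ phi s \notin mvclass V z.
Proof.
case=> _ He nc; case: (boolP (phi (k - 1) \in mvclass V z)) => h; last first.
  by exists (k - 1); split => //; lia.
have e := mv_same HV h; rewrite -e in nc *.
by case: (He _ nc k).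
Qed.

Lemma ess_above phi z k : essential opens V phi -> ~ critical opens (mvclass V z) ->
  exists s, k < s /\ phi s \notin mvclass V z.
Proof.
case=> _ He nc; case: (boolP (phi (k + 1) \in mvclass V z)) => h; last first.
  by exists (k + 1); split => //; lia.
have e := mv_same HV h; rewrite -e in nc *.
by case: (He _ nc k).
Qed.

Lemma ess_shift phi k : essential opens V phi -> essential opens V (shift phi k).
Proof.
move=> ess; split.
  move=> i; rewrite /shift; have -> : i + 1 + k = (i + k) + 1 by lia.
  by case: ess => H _; apply: H.
move=> t nc m; split.
  have [s [hs hn]] := ess_below (z := phi (t + k)) (m + k) ess nc.
  exists (s - k); rewrite /shift; have -> : s - k + k = s by lia.
  split => //; lia.
have [s [hs hn]] := ess_above (z := phi (t + k)) (m + k) ess nc.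
exists (s - k); rewrite /shift; have -> : s - k + k = s by lia.
split => //; lia.
Qed.

Lemma ess_concat phi psi : essential opens V phi -> essential opens V psi ->
  psi 1 \in Pi opens V (phi 0) -> essential opens V (concat phi psi).
Proof.
move=> e1 e2 h; split.
  move=> i; rewrite /concat.
  case: (ltrP 0 i) => hi.
    have -> : (i + 1 <= 0) = false by lia.

    by case: e2 => H _; apply: H.
  case: (boolP (i + 1 <= 0)) => hi1.
    by case: e1 => H _; apply: H.
  have -> : i = 0 by lia.
  by rewrite add0r.
move=> t nc m; split.
  have [s [hs hn]] := ess_below (z := concat phi psi t) (Num.min m 0) e1 nc.
  exists s; rewrite /concat.
  have -> : s <= 0 by move: hs; rewrite lt_min => /andP[_ ]; lia.
  split => //; move: hs; rewrite lt_min => /andP[]//.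
have [s [hs hn]] := ess_above (z := concat phi psi t) (Num.max m 0) e2 nc.
exists s; rewrite /concat.
have -> : (s <= 0) = false by move: hs; rewrite gt_max => /andP[_ ]; lia.
split => //; move: hs; rewrite gt_max => /andP[]//.
Qed.

Lemma uim_minusP (phi : int -> X) x :
  x \in uim_minus phi <-> forall t, exists s, s <= t /\ phi s = x.
Proof.
rewrite /uim_minus in_set pboolP; split => H t; last by move=> _; apply: H.
case: (boolP (t <= 0)) => ht; first exact: H.
have [s [hs e]] := H 0 (lexx 0); exists s; split => //; lia.
Qed.

Lemma uim_plusP (phi : int -> X) x :
  x \in uim_plus phi <-> forall t, exists s, t <= s /\ phi s = x.
Proof.
rewrite /uim_plus in_set pboolP; split => H t; last by move=> _; apply: H.
case: (boolP (0 <= t)) => ht; first exact: H.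
have [s [hs e]] := H 0 (lexx 0); exists s; split => //; lia.
Qed.

Lemma uim_minus_shift (phi : int -> X) k : uim_minus (shift phi k) = uim_minus phi.
Proof.
apply/setP => x; apply/idP/idP => /uim_minusP H; apply/uim_minusP => t.
  have [s [hs e]] := H (t - k); exists (s + k); split => //; lia.
have [s [hs e]] := H (t + k); exists (s - k); split; first lia.
by rewrite /shift; have -> : s - k + k = s by lia.
Qed.

Lemma uim_plus_shift (phi : int -> X) k : uim_plus (shift phi k) = uim_plus phi.
Proof.
apply/setP => x; apply/idP/idP => /uim_plusP H; apply/uim_plusP => t.
  have [s [hs e]] := H (t - k); exists (s + k); split => //; lia.
have [s [hs e]] := H (t + k); exists (s - k); split; first lia.
by rewrite /shift; have -> : s - k + k = s by lia.
Qed.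

Lemma uim_minus_concat (phi psi : int -> X) : uim_minus (concat phi psi) = uim_minus phi.
Proof.
apply/setP => x; rewrite /uim_minus !in_set; apply/idP/idP => /pboolP H; apply/pboolP => t ht.
  have [s [hs e]] := H t ht; exists s; split => //; move: e; rewrite /concat.
  by have -> : s <= 0 by lia.
have [s [hs e]] := H t ht; exists s; split => //; rewrite /concat.
by have -> : s <= 0 by lia.
Qed.

Lemma uim_plus_concat (phi psi : int -> X) : uim_plus (concat phi psi) = uim_plus psi.
Proof.
apply/setP => x; apply/idP/idP => /uim_plusP H; apply/uim_plusP => t.
  have [s [hs e]] := H (Num.max t 1); exists s; split.
    by move: hs; rewrite ge_max => /andP[].
  move: e; rewrite /concat; have -> : (s <= 0) = false by move: hs; rewrite ge_max => /andP[_]; lia.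
  done.
have [s [hs e]] := H (Num.max t 1); exists s; split.
  by move: hs; rewrite ge_max => /andP[].
rewrite /concat; have -> : (s <= 0) = false by move: hs; rewrite ge_max => /andP[_]; lia.
done.
Qed.

Lemma uim_minus_ne (phi : int -> X) : exists x, x \in uim_minus phi.
Proof.
apply: NNPP => Hn.
have H1 : forall x, exists t, t <= 0 /\ forall s, s <= t -> phi s <> x.
  move=> x; apply: NNPP => H; apply: Hn; exists x; rewrite /uim_minus in_set pboolP => t ht.
  apply: NNPP => H2; apply: H; exists t; split => // s hs e; apply: H2; by exists s.
have H2 : forall l : seq X, exists t, t <= 0 /\ forall s, s <= t -> phi s \notin l.
  elim=> [|x l [t [ht Ht]]]; first by exists 0.
  have [t' [ht' Ht']] := H1 x.
  exists (Num.min t t'); split; first by rewrite ge_min ht.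
  move=> s; rewrite le_min => /andP[h1 h2]; rewrite in_cons negb_or Ht // andbT.
  by apply/eqP; apply: Ht'.
have [t [_ Ht]] := H2 (enum X).
by move: (Ht t (lexx t)); rewrite mem_enum.
Qed.

Lemma uim_plus_ne (phi : int -> X) : exists x, x \in uim_plus phi.
Proof.
apply: NNPP => Hn.
have H1 : forall x, exists t, 0 <= t /\ forall s, t <= s -> phi s <> x.
  move=> x; apply: NNPP => H; apply: Hn; exists x; rewrite /uim_plus in_set pboolP => t ht.
  apply: NNPP => H2; apply: H; exists t; split => // s hs e; apply: H2; by exists s.
have H2 : forall l : seq X, exists t, 0 <= t /\ forall s, t <= s -> phi s \notin l.
  elim=> [|x l [t [ht Ht]]]; first by exists 0.
  have [t' [ht' Ht']] := H1 x.
  exists (Num.max t t'); split; first by rewrite le_max ht.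
  move=> s; rewrite ge_max => /andP[h1 h2]; rewrite in_cons negb_or Ht // andbT.
  by apply/eqP; apply: Ht'.
have [t [_ Ht]] := H2 (enum X).
by move: (Ht t (lexx t)); rewrite mem_enum.
Qed.

Lemma uim_minus_im (phi : int -> X) x : x \in uim_minus phi -> exists s, phi s = x.
Proof. by move/uim_minusP => /(_ 0) [s [_ e]]; exists s. Qed.

Lemma uim_plus_im (phi : int -> X) x : x \in uim_plus phi -> exists s, phi s = x.
Proof. by move/uim_plusP => /(_ 0) [s [_ e]]; exists s. Qed.

Lemma sub_hull (A : {set X}) : A \subset hull opens V A.
Proof.
apply/subsetP => x xA; rewrite inE; apply/forallP => B; apply/implyP => /and3P[_ _ /subsetP]; apply.
done.
Qed.

End Sol.

Section Morse.
Variable X : finType.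
Variable opens : {set {set X}}.
Variable V : {set {set X}}.
Variable d : Order.disp_t.
Variable P : finPOrderType d.
Variable M : P -> {set X}.
Hypothesis Htop : is_topology opens.
Hypothesis HV : multivector_field opens V.
Hypothesis Hinv : mv_invariant opens V [set: X].
Hypothesis HM : morse_decomposition opens V M.

Lemma conn_setP A B x : x \in conn_set opens V A B <->
  exists phi, [/\ essential opens V phi, phi 0%R = x,
                  alpha opens V phi \subset A & omega opens V phi \subset B].
Proof. by rewrite /conn_set in_set pboolP. Qed.

Lemma MIP J x : x \in MI opens V M J <->
  exists i j, [/\ i \in J, j \in J & x \in conn_set opens V (M i) (M j)].
Proof.
split.
  by case/bigcupP => i iJ /bigcupP [j jJ h]; exists i, j.
case=> i [j [iJ jJ h]]; apply/bigcupP; exists i => //; apply/bigcupP; exists j => //.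
Qed.

Lemma disjM p q x : x \in M p -> x \in M q -> p = q.
Proof.
case: HM => Hd _ _ xp xq; apply/eqP; apply: contraT => /Hd dj.
by rewrite (disjointFr dj xp) in xq.
Qed.

Lemma alpha_uniq phi p q : alpha opens V phi \subset M p -> alpha opens V phi \subset M q -> p = q.
Proof.
move=> /subsetP h1 /subsetP h2; have [x hx] := uim_minus_ne phi.
have hx' := subsetP (sub_hull opens V (uim_minus phi)) x hx.
exact: (disjM (h1 x hx') (h2 x hx')).
Qed.

Lemma omega_uniq phi p q : omega opens V phi \subset M p -> omega opens V phi \subset M q -> p = q.
Proof.
move=> /subsetP h1 /subsetP h2; have [x hx] := uim_plus_ne phi.
have hx' := subsetP (sub_hull opens V (uim_plus phi)) x hx.
exact: (disjM (h1 x hx') (h2 x hx')).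
Qed.

Lemma morse_refined phi : essential opens V phi -> exists p q,
  [/\ (p <= q)%O, alpha opens V phi \subset M q & omega opens V phi \subset M p].
Proof.
move=> ess; case: HM => _ Hiso /(_ phi ess) [[r Hr]|[p [q [pq ha ho]]]]; last first.
  by exists p, q; split => //; apply: ltW.
exists r, r; split => //; apply: hull_sub => //; apply/subsetP => x.
  by case/uim_minus_im => s <-.
by case/uim_plus_im => s <-.
Qed.

Lemma conn_order phi1 phi2 y a e :
  essential opens V phi1 -> phi1 0%R = y -> alpha opens V phi1 \subset M a ->
  essential opens V phi2 -> phi2 0%R = y -> omega opens V phi2 \subset M e ->
  (e <= a)%O.
Proof.
move=> e1 h1 a1 e2 h2 o2.
have h : phi2 1%R \in Pi opens V (phi1 0%R).
  rewrite h1 -h2; case: e2 => H _; by have := H 0%R; rewrite add0r.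
have ec := ess_concat HV e1 e2 h.
have [p [q [pq ha ho]]] := morse_refined ec.
move: ha ho; rewrite /alpha /omega uim_minus_concat uim_plus_concat => ha ho.
by rewrite (alpha_uniq a1 ha) (omega_uniq o2 ho).
Qed.

Lemma self_conn y e : y \in M e -> y \in conn_set opens V (M e) (M e).
Proof.
case: HM => _ /(_ e) Hiso _; have Hiso' := Hiso; case: Hiso' => Hi _.
rewrite -{1}Hi /Inv in_set pboolP => [[phi [ess Hin h0]]].
apply/conn_setP; exists phi; split => //; apply: hull_sub => //; apply/subsetP => x.
  by case/uim_minus_im => s <-.
by case/uim_plus_im => s <-.
Qed.

Lemma forward (J : {set P}) : (forall a b, (a <= b)%O -> b \in J -> a \in J) ->
  forall x y, x \in MI opens V M J -> y \in Pi opens V x -> y \in MI opens V M J.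
Proof.
move=> Jdown x y /MIP [i [j [iJ jJ /conn_setP [phi [ess h0 ha ho]]]]] hy.
have : y \in Inv opens V [set: X] by rewrite Hinv inE.
rewrite /Inv in_set pboolP => [[psi [epsi _ psi0]]].
have es := ess_shift HV (-1)%R epsi.
have h : shift psi (-1)%R 1%R \in Pi opens V (phi 0%R) by rewrite /shift addrN psi0 h0.
have ec := ess_concat HV ess es h.
have [p [q [pq hac hoc]]] := morse_refined ec.
move: hac; rewrite /alpha uim_minus_concat => hac.
have eq := alpha_uniq ha hac; subst q.
apply/MIP; exists i, p; split => //; first exact: (Jdown p i).
apply/conn_setP; exists (shift (concat phi (shift psi (-1)%R)) 1%R); split.
- exact: (ess_shift HV 1%R ec).
- by rewrite /shift add0r /concat /= addrN psi0.
- by rewrite /alpha uim_minus_shift uim_minus_concat.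
- by move: hoc; rewrite /omega uim_plus_shift.
Qed.

End Morse.

Theorem theorem7p7 (X : finType) (opens : {set {set X}}) (V : {set {set X}})
    {d : Order.disp_t} (P : finPOrderType d) (M : P -> {set X}) (I : {set P}) :
  is_topology opens -> is_T0 opens ->
  multivector_field opens V ->
  mv_invariant opens V [set: X] ->
  morse_decomposition opens V M ->
  convex I ->
  index_pair opens V (MI opens V M I)
    (MI opens V M (down_le I)) (MI opens V M (down_lt I)).
Proof.
move=> Htop _ HV Hinv HM Hconv.
have hle : forall a b : P, (a <= b)%O -> b \in down_le I -> a \in down_le I.
  move=> a b ab; rewrite !inE => /existsP [c /andP[cI bc]].
  by apply/existsP; exists c; rewrite cI (le_trans ab bc).
have hlt : forall a b : P, (a <= b)%O -> b \in down_lt I -> a \in down_lt I.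
  move=> a b ab; rewrite /down_lt !in_setD => /andP[bI bl].
  rewrite (hle a b ab bl) andbT; apply: contra bI => aI.
  move: bl; rewrite inE => /existsP [c /andP[cI bc]]; exact: (Hconv a b c).
have fw1 := forward Htop HV Hinv HM hle.
have fw2 := forward Htop HV Hinv HM hlt.
set P1 := MI opens V M (down_le I) in fw1 *.
set P2 := MI opens V M (down_lt I) in fw2 *.
have leI : forall i, i \in I -> i \in down_le I.
  by move=> i iI; rewrite inE; apply/existsP; exists i; rewrite iI lexx.
split.
- apply/andP; split; apply: closed_of_down => // x y hx hy.
    by apply: (fw1 x) => //; apply: cl_Pi.
  by apply: (fw2 x) => //; apply: cl_Pi.
- apply/subsetP => x /MIP [i [j [iJ jJ h]]]; apply/MIP; exists i, j.
  by move: iJ jJ; rewrite /down_lt !in_setD => /andP[_ ->] /andP[_ ->].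
- by move=> x y hx hy _; apply: (fw2 x).
- move=> x hx /subsetP []; move=> y; exact: fw1.
apply/setP => x; apply/idP/idP.
  case/MIP => i [j [iI jI /conn_setP [phi [ess h0 ha ho]]]].
  rewrite /Inv in_set pboolP; exists phi; split => // t.
  have es := ess_shift HV t ess.
  have hct : phi t \in conn_set opens V (M i) (M j).
    apply/conn_setP; exists (shift phi t); split => //.
    - by rewrite /shift add0r.
    - by rewrite /alpha uim_minus_shift.
    - by rewrite /omega uim_plus_shift.
  rewrite in_setD; apply/andP; split; last first.
    by apply/MIP; exists i, j; split => //; apply: leI.
  apply/negP => /MIP [a [b [aJ bJ /conn_setP [psi [epsi psi0 hpa hpb]]]]].
  have ja : (j <= a)%O.
    apply: (conn_order Htop HV HM epsi psi0 hpa es).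
      by rewrite /shift add0r.
    by rewrite /omega uim_plus_shift.
  move: aJ; rewrite /down_lt in_setD inE => /andP[aI /existsP [c /andP[cI ac]]].
  by move/negP: aI; apply; apply: (Hconv j a c).
rewrite /Inv in_set pboolP => [[phi [ess Hin h0]]].
have key : forall e y, y \in M e -> y \in P1 :\: P2 -> e \in I.
  move=> e y ye; rewrite in_setD => /andP[yP2 /MIP [a [b [aJ bJ /conn_setP [psi [epsi psi0 hpa hpb]]]]]].
  have /conn_setP [chi [echi chi0 hca hco]] := self_conn Htop HV HM ye.
  have ea := conn_order Htop HV HM epsi psi0 hpa echi chi0 hco.
  have eJ := hle e a ea aJ.
  case: (boolP (e \in I)) => // eI; exfalso; move/negP: yP2; apply; apply/MIP; exists e, e.
  have eJ' : e \in down_lt I by rewrite /down_lt in_setD eI.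
  by split => //; apply: self_conn.
have [p [q [pq ha ho]]] := morse_refined Htop HV HM ess.
have qI : q \in I.
  have [z hz] := uim_minus_ne phi.
  have zq := subsetP ha z (subsetP (sub_hull opens V _) z hz).
  have [s hs] := uim_minus_im hz.
  by apply: (key q z zq); rewrite -hs.
have pI : p \in I.
  have [z hz] := uim_plus_ne phi.
  have zp := subsetP ho z (subsetP (sub_hull opens V _) z hz).
  have [s hs] := uim_plus_im hz.
  by apply: (key p z zp); rewrite -hs.
by apply/MIP; exists q, p; split => //; apply/conn_setP; exists phi.
Qed.
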